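(* Let $X$ and $Y$ be real Banach lattices (nonzero). The following are equivalent: (i) Every uniformly bounded subset $\mathscr{T}\subseteq\mathcal{L}(X,Y)$ is $\ell^2$-bounded. (ii) $X$ is $2$-concave and $Y$ is $2$-convex.
   Context: A family $\mathscr{T}\subseteq\mathcal{L}(X,Y)$ is uniformly bounded if $\sup_{T\in\mathscr{T}}\|T\|<\infty$. It is $\ell^2$-bounded if there is $C\ge0$ with $\|(\sum_{n=1}^N|T_nx_n|^2)^{1/2}\|\le C\|(\sum_{n=1}^N|x_n|^2)^{1/2}\|$ for all $N$, all $x_n\in X$ and all $T_n\in\mathscr{T}$ (square functions via Krivine's calculus). A Banach lattice $X$ is $2$-concave if there is $C_X$ with $(\sum_{n=1}^N\|x_n\|^2)^{1/2}\le C_X\|(\sum_{n=1}^N|x_n|^2)^{1/2}\|$ for all $N$ and $x_1,\dots,x_N\in X$; it is $2$-convex if $\|(\sum_{n=1}^N|x_n|^2)^{1/2}\|\le C_X(\sum_{n=1}^N\|x_n\|^2)^{1/2}$ for all such. *)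

(* Defs.v *)
From Stdlib Require Export Reals.
Open Scope R_scope.

Record BanachLattice : Type := {
  BL :> Type;
  bl0 : BL;
  bladd : BL -> BL -> BL;
  blopp : BL -> BL;
  blscal : R -> BL -> BL;
  blle : BL -> BL -> Prop;
  bljoin : BL -> BL -> BL;
  blnorm : BL -> R;
  bl_addA : forall x y z, bladd x (bladd y z) = bladd (bladd x y) z;
  bl_addC : forall x y, bladd x y = bladd y x;
  bl_add0 : forall x, bladd x bl0 = x;
  bl_addN : forall x, bladd x (blopp x) = bl0;
  bl_scalDr : forall a x y, blscal a (bladd x y) = bladd (blscal a x) (blscal a y);
  bl_scalDl : forall a b x, blscal (a + b) x = bladd (blscal a x) (blscal b x);
  bl_scalA : forall a b x, blscal a (blscal b x) = blscal (a * b) x;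
  bl_scal1 : forall x, blscal 1 x = x;
  bl_le_refl : forall x, blle x x;
  bl_le_antisym : forall x y, blle x y -> blle y x -> x = y;
  bl_le_trans : forall x y z, blle x y -> blle y z -> blle x z;
  bl_le_add : forall x y z, blle x y -> blle (bladd x z) (bladd y z);
  bl_le_scal : forall a x y, 0 <= a -> blle x y -> blle (blscal a x) (blscal a y);
  bl_join_l : forall x y, blle x (bljoin x y);
  bl_join_r : forall x y, blle y (bljoin x y);
  bl_join_lub : forall x y z, blle x z -> blle y z -> blle (bljoin x y) z;
  bl_norm_eq0 : forall x, blnorm x = 0 -> x = bl0;
  bl_norm_tri : forall x y, blnorm (bladd x y) <= blnorm x + blnorm y;
  bl_norm_scal : forall a x, blnorm (blscal a x) = Rabs a * blnorm x;
  bl_norm_lattice : forall x y,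
    blle (bljoin x (blopp x)) (bljoin y (blopp y)) -> blnorm x <= blnorm y;
  bl_complete : forall u : nat -> BL,
    (forall eps, 0 < eps -> exists N, forall m n, (N <= m)%nat -> (N <= n)%nat ->
        blnorm (bladd (u m) (blopp (u n))) < eps) ->
    exists l, forall eps, 0 < eps -> exists N, forall n, (N <= n)%nat ->
        blnorm (bladd (u n) (blopp l)) < eps
}.

Arguments bl0 {_}.
Arguments bladd {_}.
Arguments blopp {_}.
Arguments blscal {_}.
Arguments blle {_}.
Arguments bljoin {_}.
Arguments blnorm {_}.

Definition nontrivial (X : BanachLattice) : Prop := exists x : X, x <> bl0.

Fixpoint vsum {X : BanachLattice} (N : nat) (f : nat -> X) : X :=
  match N with
  | O => bl0
  | S n => bladd (vsum n f) (f n)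
  end.

Fixpoint rsum (N : nat) (f : nat -> R) : R :=
  match N with
  | O => 0
  | S n => rsum n f + f n
  end.

(* s = (sum_{n<N} |x_n|^2)^{1/2}, the square function given by Krivine's
   calculus, represented as the (always existing) supremum
   sup { sum_{n<N} a_n x_n : sum_{n<N} a_n^2 <= 1 }  (Lindenstrauss-Tzafriri II, 1.d). *)
Definition sqfun {X : BanachLattice} (N : nat) (x : nat -> X) (s : X) : Prop :=
  (forall a : nat -> R, rsum N (fun n => a n ^ 2) <= 1 ->
      blle (vsum N (fun n => blscal (a n) (x n))) s) /\
  (forall u : X, (forall a : nat -> R, rsum N (fun n => a n ^ 2) <= 1 ->
      blle (vsum N (fun n => blscal (a n) (x n))) u) -> blle s u).

Definition is_linear {X Y : BanachLattice} (T : X -> Y) : Prop :=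
  (forall x y, T (bladd x y) = bladd (T x) (T y)) /\
  (forall a x, T (blscal a x) = blscal a (T x)).

Definition op_bounded_by {X Y : BanachLattice} (T : X -> Y) (M : R) : Prop :=
  forall x, blnorm (T x) <= M * blnorm x.

Definition is_bounded_op {X Y : BanachLattice} (T : X -> Y) : Prop :=
  is_linear T /\ exists M, op_bounded_by T M.

Definition subset_L (X Y : BanachLattice) (fam : (X -> Y) -> Prop) : Prop :=
  forall T, fam T -> is_bounded_op T.

Definition uniformly_bounded {X Y : BanachLattice} (fam : (X -> Y) -> Prop) : Prop :=
  exists M, forall T, fam T -> op_bounded_by T M.

Definition l2_bounded {X Y : BanachLattice} (fam : (X -> Y) -> Prop) : Prop :=
  exists C, 0 <= C /\
    forall (N : nat) (x : nat -> X) (T : nat -> (X -> Y)),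
      (forall n, (n < N)%nat -> fam (T n)) ->
      forall (s : X) (t : Y),
        sqfun N x s -> sqfun N (fun n => T n (x n)) t ->
        blnorm t <= C * blnorm s.

Definition two_concave (X : BanachLattice) : Prop :=
  exists C, forall (N : nat) (x : nat -> X) (s : X), sqfun N x s ->
    sqrt (rsum N (fun n => blnorm (x n) ^ 2)) <= C * blnorm s.

Definition two_convex (X : BanachLattice) : Prop :=
  exists C, forall (N : nat) (x : nat -> X) (s : X), sqfun N x s ->
    blnorm s <= C * sqrt (rsum N (fun n => blnorm (x n) ^ 2)).

(* Main.v *)
Require Import Defs.
From Stdlib Require Import Reals Lra Lia ClassicalEpsilon FunctionalExtensionality.
From mathcomp Require classical_sets.
Open Scope R_scope.

Lemma add0l {X : BanachLattice} (x : X) : bladd bl0 x = x.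
Proof. rewrite bl_addC; apply bl_add0. Qed.

Lemma add_cancel {X : BanachLattice} (x y z : X) : bladd x y = bladd x z -> y = z.
Proof.
  intros H.
  assert (E : bladd (blopp x) (bladd x y) = bladd (blopp x) (bladd x z)) by (rewrite H; reflexivity).
  rewrite !bl_addA in E. rewrite (bl_addC _ (blopp x) x), bl_addN, !add0l in E. exact E.
Qed.

Lemma scal0 {X : BanachLattice} (x : X) : blscal 0 x = bl0.
Proof.
  apply (add_cancel (blscal 0 x)). rewrite bl_add0, <- bl_scalDl. f_equal; ring.
Qed.

Lemma scalx0 {X : BanachLattice} (a : R) : blscal a (@bl0 X) = bl0.
Proof.
  apply (add_cancel (blscal a bl0)). rewrite bl_add0, <- bl_scalDr, bl_add0. reflexivity.
Qed.

Lemma opp_scal {X : BanachLattice} (x : X) : blopp x = blscal (-1) x.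
Proof.
  apply (add_cancel x). rewrite bl_addN. rewrite <- (bl_scal1 _ x) at 1.
  rewrite <- bl_scalDl. replace (1 + -1) with 0 by ring. rewrite scal0. reflexivity.
Qed.

Lemma oppD {X : BanachLattice} (x y : X) : blopp (bladd x y) = bladd (blopp x) (blopp y).
Proof. rewrite !opp_scal, bl_scalDr. reflexivity. Qed.

Lemma oppK {X : BanachLattice} (x : X) : blopp (blopp x) = x.
Proof. rewrite !opp_scal, bl_scalA. replace (-1 * -1) with 1 by ring. apply bl_scal1. Qed.

Lemma scal_opp {X : BanachLattice} (a : R) (x : X) : blscal a x = blopp (blscal (- a) x).
Proof. rewrite opp_scal, bl_scalA. f_equal; ring. Qed.

Lemma opp0 {X : BanachLattice} : blopp (@bl0 X) = bl0.
Proof. rewrite opp_scal. apply scalx0. Qed.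

Lemma norm0 {X : BanachLattice} : blnorm (@bl0 X) = 0.
Proof. rewrite <- (scal0 (@bl0 X)), bl_norm_scal, Rabs_R0. ring. Qed.

Lemma norm_opp {X : BanachLattice} (x : X) : blnorm (blopp x) = blnorm x.
Proof. rewrite opp_scal, bl_norm_scal. replace (Rabs (-1)) with 1. ring. rewrite Rabs_left by lra. ring. Qed.

Lemma norm_ge0 {X : BanachLattice} (x : X) : 0 <= blnorm x.
Proof.
  pose proof (bl_norm_tri _ x (blopp x)) as H. rewrite bl_addN, norm0, norm_opp in H. lra.
Qed.

Lemma le_opp {X : BanachLattice} (x y : X) : blle x y -> blle (blopp y) (blopp x).
Proof.
  intros H. pose proof (bl_le_add _ _ _ (bladd (blopp x) (blopp y)) H) as H1.
  rewrite !bl_addA, bl_addN, add0l in H1.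
  rewrite (bl_addC _ y (blopp x)), <- bl_addA, bl_addN, bl_add0 in H1. exact H1.
Qed.

Lemma le_add2 {X : BanachLattice} (x y z w : X) : blle x y -> blle z w -> blle (bladd x z) (bladd y w).
Proof.
  intros H1 H2. apply bl_le_trans with (bladd y z). apply bl_le_add; auto.
  rewrite (bl_addC _ y z), (bl_addC _ y w). apply bl_le_add; auto.
Qed.

Definition absv {X : BanachLattice} (v : X) : X := bljoin v (blopp v).

Lemma absv_ge0 {X : BanachLattice} (v : X) : blle bl0 (absv v).
Proof.
  pose proof (le_add2 _ _ _ _ (bl_join_l _ v (blopp v)) (bl_join_r _ v (blopp v))) as H.
  rewrite bl_addN in H. fold (absv v) in H. apply (bl_le_scal _ (/2)) in H; [|lra].
  rewrite scalx0 in H. replace (bladd (absv v) (absv v)) with (blscal 2 (absv v)) in H.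
  rewrite bl_scalA in H. replace (/2 * 2) with 1 in H by field. rewrite bl_scal1 in H. exact H.
  replace 2 with (1+1) by ring. rewrite bl_scalDl, bl_scal1. reflexivity.
Qed.

Lemma absv_abs {X : BanachLattice} (v : X) : absv (absv v) = absv v.
Proof.
  apply bl_le_antisym.
  - apply bl_join_lub. apply bl_le_refl. apply bl_le_trans with bl0.
    pose proof (le_opp _ _ (absv_ge0 v)) as H. rewrite opp0 in H. exact H.
    apply absv_ge0.
  - apply bl_join_l.
Qed.

Lemma norm_absv {X : BanachLattice} (v : X) : blnorm (absv v) = blnorm v.
Proof.
  apply Rle_antisym; apply bl_norm_lattice; fold (absv v); fold (absv (absv v));
  rewrite absv_abs; apply bl_le_refl.
Qed.

Lemma scal_le_abs {X : BanachLattice} (c R0 : R) (v : X) : Rabs c <= R0 ->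
  blle (blscal c v) (blscal R0 (absv v)).
Proof.
  intros H. apply bl_le_trans with (blscal (Rabs c) (absv v)).
  - destruct (Rle_dec 0 c).
    + rewrite Rabs_right by lra. apply bl_le_scal; auto. apply bl_join_l.
    + rewrite Rabs_left by lra. rewrite scal_opp, opp_scal, bl_scalA.
      replace (-1 * - c) with (- c * -1) by ring. rewrite <- bl_scalA, <- opp_scal.
      apply bl_le_scal; [lra|]. apply bl_join_r.
  - replace R0 with (Rabs c + (R0 - Rabs c)) by ring. rewrite bl_scalDl.
    rewrite <- (bl_add0 _ (blscal (Rabs c) (absv v))) at 1. rewrite (bl_addC _ (blscal (Rabs c) (absv v))), (bl_addC _ (blscal (Rabs c) (absv v))).
    apply bl_le_add. rewrite <- (scalx0 (R0 - Rabs c)). apply bl_le_scal; [lra|]. apply absv_ge0.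
Qed.

Lemma rsum_le (N : nat) (f g : nat -> R) : (forall n, (n < N)%nat -> f n <= g n) -> rsum N f <= rsum N g.
Proof.
  induction N; simpl; intros H. lra.
  assert (rsum N f <= rsum N g) by (apply IHN; intros; apply H; lia). specialize (H N). assert (f N <= g N) by (apply H; lia). lra.
Qed.

Lemma rsum_ext (N : nat) (f g : nat -> R) : (forall n, f n = g n) -> rsum N f = rsum N g.
Proof. intros H. induction N; simpl; auto. rewrite IHN, H. reflexivity. Qed.

Lemma rsum_plus (N : nat) (f g : nat -> R) : rsum N (fun n => f n + g n) = rsum N f + rsum N g.
Proof. induction N; simpl. ring. rewrite IHN. ring. Qed.

Lemma rsum_scal (N : nat) (c : R) (f : nat -> R) : rsum N (fun n => c * f n) = c * rsum N f.
Proof. induction N; simpl. ring. rewrite IHN. ring. Qed.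

Lemma rsum_ge0 (N : nat) (f : nat -> R) : (forall n, 0 <= f n) -> 0 <= rsum N f.
Proof. intros H. induction N; simpl. lra. specialize (H N). lra. Qed.

Lemma rsum0 (N : nat) : rsum N (fun _ => 0) = 0.
Proof. induction N; simpl. ring. rewrite IHN. ring. Qed.

Lemma vsum_scal {X : BanachLattice} (N : nat) (a r : nat -> R) (v : X) :
  vsum N (fun n => blscal (a n) (blscal (r n) v)) = blscal (rsum N (fun n => a n * r n)) v.
Proof.
  induction N; simpl. symmetry; apply scal0.
  rewrite IHN, bl_scalA, <- bl_scalDl. reflexivity.
Qed.

Lemma cs_bound (N : nat) (a r : nat -> R) : rsum N (fun n => a n ^ 2) <= 1 ->
  Rabs (rsum N (fun n => a n * r n)) <= sqrt (rsum N (fun n => r n ^ 2)).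
Proof.
  intros Ha. set (S := rsum N (fun n => r n ^ 2)). set (c := rsum N (fun n => a n * r n)).
  assert (HS : 0 <= S) by (apply rsum_ge0; intros; nra).
  assert (key : forall e, 0 < e -> Rabs c <= (e + S / e) / 2).
  { intros e He.
    assert (H1 : forall s, s = 1 \/ s = -1 -> s * c <= (e * rsum N (fun n => a n ^ 2) + S / e) / 2).
    { intros s Hs.
      assert (E1 : s * c = rsum N (fun n => s * (a n * r n))) by (unfold c; rewrite rsum_scal; ring).
      assert (E2 : (e * rsum N (fun n => a n ^ 2) + S / e) / 2 = rsum N (fun n => / 2 * (e * a n ^ 2) + / 2 * (/ e * r n ^ 2))).
      { rewrite rsum_plus, !rsum_scal. unfold S. field. lra. }
      rewrite E1, E2. apply rsum_le. intros n _.
      assert (s * s = 1) by (destruct Hs; subst; ring).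
      apply Rmult_le_reg_l with (2 * e). lra.
      assert (Hq : 0 <= (e * (s * a n) - r n) ^ 2) by apply pow2_ge_0.
      assert (Eq : (e * (s * a n) - r n) ^ 2 = (s * s) * (e * (e * a n ^ 2)) - 2 * e * (s * (a n * r n)) + r n ^ 2) by ring.
      match goal with H : s * s = 1 |- _ => rewrite H in Eq end.
      replace (2 * e * (/ 2 * (e * a n ^ 2) + / 2 * (/ e * r n ^ 2))) with (e * (e * a n ^ 2) + r n ^ 2) by (field; lra).
      lra. }
    assert (e * rsum N (fun n => a n ^ 2) <= e) by nra.
    pose proof (H1 1 (or_introl eq_refl)). pose proof (H1 (-1) (or_intror eq_refl)).
    unfold Rabs; destruct (Rcase_abs c); lra. }
  destruct (Rle_lt_dec S 0) as [HS0|HS0].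
  - assert (S = 0) by lra. rewrite H, sqrt_0. destruct (Rle_dec (Rabs c) 0). auto.
    specialize (key (Rabs c) ltac:(lra)). rewrite H in key. unfold Rdiv in key. rewrite Rmult_0_l, Rplus_0_r in key. lra.
  - assert (Hs : 0 < sqrt S) by (apply sqrt_lt_R0; auto). specialize (key (sqrt S) Hs).
    pose proof (sqrt_sqrt S HS). replace (S / sqrt S) with (sqrt S) in key by (field_simplify_eq; lra). lra.
Qed.

Lemma sqfun_scal {X : BanachLattice} (N : nat) (r : nat -> R) (v : X) :
  sqfun N (fun n => blscal (r n) v) (blscal (sqrt (rsum N (fun n => r n ^ 2))) (absv v)).
Proof.
  set (S := rsum N (fun n => r n ^ 2)). assert (HS : 0 <= S) by (apply rsum_ge0; intros; nra).
  split.
  - intros a Ha. rewrite vsum_scal. apply scal_le_abs. apply cs_bound; auto.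
  - intros u Hu. destruct (Rle_lt_dec (sqrt S) 0) as [H0|H0].
    + assert (sqrt S = 0) by (pose proof (sqrt_pos S); lra). rewrite H, scal0.
      specialize (Hu (fun _ => 0)). rewrite vsum_scal in Hu.
      rewrite (rsum_ext N (fun n => 0 * r n) (fun _ => 0)), rsum0, scal0 in Hu by (intros; ring).
      apply Hu. rewrite (rsum_ext N _ (fun _ => 0)), rsum0 by (intros; ring). lra.
    + set (R0 := sqrt S) in *.
      assert (HR : R0 * R0 = S) by apply sqrt_sqrt, HS.
      assert (Hb : forall s, s * s = 1 -> blle (blscal (s * R0) v) u).
      { intros s Hs. specialize (Hu (fun n => s * r n / R0)). rewrite vsum_scal in Hu.
        rewrite (rsum_ext N (fun n => s * r n / R0 * r n) (fun n => (s / R0) * (r n ^ 2))) in Hu by (intros; field; lra).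
        rewrite rsum_scal in Hu. fold S in Hu. replace (s / R0 * S) with (s * R0) in Hu by (rewrite <- HR; field; lra).
        apply Hu. rewrite (rsum_ext N (fun n => (s * r n / R0) ^ 2) (fun n => (s * s / (R0 * R0)) * (r n ^ 2))) by (intros; field; lra).
        rewrite rsum_scal. fold S. rewrite Hs, <- HR. right; field; lra. }
      assert (Hv : blle (absv v) (blscal (/ R0) u)).
      { apply bl_join_lub.
        - pose proof (bl_le_scal _ (/ R0) _ _ ltac:(left; apply Rinv_0_lt_compat; lra) (Hb 1 ltac:(ring))) as H.
          rewrite bl_scalA in H. replace (/ R0 * (1 * R0)) with 1 in H by (field; lra). rewrite bl_scal1 in H. exact H.
        - pose proof (bl_le_scal _ (/ R0) _ _ ltac:(left; apply Rinv_0_lt_compat; lra) (Hb (-1) ltac:(ring))) as H.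
          rewrite bl_scalA in H. replace (/ R0 * (-1 * R0)) with (-1) in H by (field; lra). rewrite <- opp_scal in H. exact H. }
      apply (bl_le_scal _ R0) in Hv; [|lra]. rewrite bl_scalA in Hv. replace (R0 * / R0) with 1 in Hv by (field; lra).
      rewrite bl_scal1 in Hv. exact Hv.
Qed.

Definition rsup (E : R -> Prop) : R :=
  match excluded_middle_informative (bound E /\ exists x, E x) with
  | left H => proj1_sig (completeness E (proj1 H) (proj2 H))
  | right _ => 0 end.

Lemma rsup_spec (E : R -> Prop) : bound E -> (exists x, E x) -> is_lub E (rsup E).
Proof.
  intros H1 H2. unfold rsup. destruct (excluded_middle_informative _) as [H|H].
  - destruct (completeness E (proj1 H) (proj2 H)) as [m Hm]. exact Hm.
  - exfalso; tauto.
Qed.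

Definition rinf (E : R -> Prop) : R := - rsup (fun y => E (- y)).

Lemma rinf_lb (E : R -> Prop) (m : R) : (forall e, E e -> m <= e) -> forall e, E e -> rinf E <= e.
Proof.
  intros Hm e He. unfold rinf.
  assert (L : is_lub (fun y => E (- y)) (rsup (fun y => E (- y)))).
  { apply rsup_spec. exists (- m). intros y Hy. specialize (Hm _ Hy). lra.
    exists (- e). rewrite Ropp_involutive. exact He. }
  destruct L as [L1 L2]. assert (- e <= rsup (fun y => E (- y))). apply L1. rewrite Ropp_involutive; exact He. lra.
Qed.

Lemma rinf_glb (E : R -> Prop) (b : R) : (exists e, E e) -> (forall e, E e -> b <= e) -> b <= rinf E.
Proof.
  intros [e He] Hb. unfold rinf.
  assert (L : is_lub (fun y => E (- y)) (rsup (fun y => E (- y)))).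
  { apply rsup_spec. exists (- b). intros y Hy. specialize (Hb _ Hy). lra.
    exists (- e). rewrite Ropp_involutive. exact He. }
  destruct L as [L1 L2]. assert (rsup (fun y => E (- y)) <= - b). apply L2. intros y Hy. specialize (Hb _ Hy). lra. lra.
Qed.

Definition sublin {X : BanachLattice} (q : X -> R) : Prop :=
  (forall x y, q (bladd x y) <= q x + q y) /\ (forall a x, 0 <= a -> q (blscal a x) = a * q x).

Lemma sublin0 {X : BanachLattice} (q : X -> R) : sublin q -> q bl0 = 0.
Proof. intros [_ H]. rewrite <- (scalx0 0), H by lra. ring. Qed.

Lemma sublin_lower {X : BanachLattice} (q : X -> R) x : sublin q -> - q (blopp x) <= q x.
Proof. intros Hq. pose proof (proj1 Hq x (blopp x)). rewrite bl_addN, sublin0 in H by auto. lra. Qed.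

Lemma vid1 {X : BanachLattice} (x z : X) : bladd (bladd x z) (blopp x) = z.
Proof. rewrite (bl_addC _ x z), <- bl_addA, bl_addN, bl_add0. reflexivity. Qed.

Lemma vid2 {X : BanachLattice} (x1 x2 z1 z2 : X) :
  bladd (bladd x1 x2) (bladd z1 z2) = bladd (bladd x1 z1) (bladd x2 z2).
Proof.
  rewrite !bl_addA. f_equal. rewrite <- !bl_addA. f_equal. apply bl_addC.
Qed.

Definition extE {X : BanachLattice} (q : X -> R) (y x : X) (e : R) : Prop :=
  exists t, 0 <= t /\ e = q (bladd x (blscal t y)) - t * q y.

Definition ext {X : BanachLattice} (q : X -> R) (y : X) (x : X) : R := rinf (extE q y x).

Lemma extE_lb {X : BanachLattice} (q : X -> R) y x : sublin q -> forall e, extE q y x e -> - q (blopp x) <= e.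
Proof.
  intros Hq e [t [Ht ->]]. pose proof (proj1 Hq (bladd x (blscal t y)) (blopp x)) as H.
  rewrite vid1, (proj2 Hq) in H by auto. lra.
Qed.

Lemma extE_ne {X : BanachLattice} (q : X -> R) y x : exists e, extE q y x e.
Proof. exists (q (bladd x (blscal 0 y)) - 0 * q y). exists 0. split; [lra|reflexivity]. Qed.

Lemma ext_le {X : BanachLattice} (q : X -> R) y x : sublin q -> ext q y x <= q x.
Proof.
  intros Hq. apply (rinf_lb _ _ (extE_lb q y x Hq)). exists 0. split. lra.
  rewrite scal0, bl_add0. ring.
Qed.

Lemma ext_neg {X : BanachLattice} (q : X -> R) y : sublin q -> ext q y (blopp y) <= - q y.
Proof.
  intros Hq. apply (rinf_lb _ _ (extE_lb q y _ Hq)). exists 1. split. lra.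
  rewrite bl_scal1, bl_addC, bl_addN, sublin0 by auto. ring.
Qed.

Lemma ext_sublin {X : BanachLattice} (q : X -> R) y : sublin q -> sublin (ext q y).
Proof.
  intros Hq. split.
  - intros x1 x2.
    assert (H : forall e2, extE q y x2 e2 -> ext q y (bladd x1 x2) - e2 <= ext q y x1).
    { intros e2 He2. apply rinf_glb. apply extE_ne. intros e1 [t1 [Ht1 ->]].
      destruct He2 as [t2 [Ht2 ->]].
      assert (ext q y (bladd x1 x2) <= q (bladd (bladd x1 x2) (blscal (t1 + t2) y)) - (t1 + t2) * q y).
      { apply (rinf_lb _ _ (extE_lb q y _ Hq)). exists (t1 + t2). split. lra. reflexivity. }
      rewrite bl_scalDl, vid2 in H. pose proof (proj1 Hq (bladd x1 (blscal t1 y)) (bladd x2 (blscal t2 y))). lra. }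
    assert (ext q y (bladd x1 x2) - ext q y x1 <= ext q y x2).
    { apply rinf_glb. apply extE_ne. intros e2 He2. specialize (H e2 He2). lra. }
    lra.
  - intros a x Ha. destruct (Req_dec a 0) as [->|Ha0].
    + rewrite scal0, Rmult_0_l. apply Rle_antisym.
      * apply (rinf_lb _ _ (extE_lb q y _ Hq)). exists 0. split. lra. rewrite scal0, bl_add0, sublin0 by auto. ring.
      * apply rinf_glb. apply extE_ne. intros e [t [Ht ->]]. rewrite add0l, (proj2 Hq) by auto. lra.
    + apply Rle_antisym.
      * assert (H1 : ext q y (blscal a x) / a <= ext q y x).
        2:{ replace (ext q y (blscal a x)) with (a * (ext q y (blscal a x) / a)) by (field; lra). apply Rmult_le_compat_l; lra. }
        apply rinf_glb. apply extE_ne. intros e [t [Ht ->]].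
        assert (ext q y (blscal a x) <= q (bladd (blscal a x) (blscal (a * t) y)) - (a * t) * q y).
        { apply (rinf_lb _ _ (extE_lb q y _ Hq)). exists (a * t). split. nra. reflexivity. }
        rewrite <- bl_scalA, <- bl_scalDr, (proj2 Hq) in H by lra.
        apply Rmult_le_reg_l with a. lra. field_simplify; lra.
      * apply rinf_glb. apply extE_ne. intros e [t [Ht ->]].
        assert (ext q y x <= q (bladd x (blscal (t / a) y)) - (t / a) * q y).
        { apply (rinf_lb _ _ (extE_lb q y _ Hq)). exists (t / a). split. apply Rmult_le_pos; [lra|]. left; apply Rinv_0_lt_compat; lra. reflexivity. }
        replace (blscal t y) with (blscal a (blscal (t / a) y)) by (rewrite bl_scalA; f_equal; field; lra).
        rewrite <- bl_scalDr, (proj2 Hq) by lra.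
        apply Rmult_le_compat_l with (r := a) in H; [|lra].
        replace (a * (q (bladd x (blscal (t / a) y)) - t / a * q y)) with (a * q (bladd x (blscal (t / a) y)) - t * q y) in H by (field; lra).
        exact H.
Qed.

Definition pb (P : Prop) : bool := if excluded_middle_informative P then true else false.
Lemma pbP (P : Prop) : pb P = true <-> P.
Proof. unfold pb. destruct (excluded_middle_informative P); split; intros; auto; discriminate. Qed.
Lemma pbE (P : Prop) : pb P = true -> P.
Proof. apply pbP. Qed.
Lemma pbI (P : Prop) : P -> pb P = true.
Proof. apply pbP. Qed.

Lemma minimal_sublin {X : BanachLattice} (p0 : X -> R) : sublin p0 ->
  exists q, sublin q /\ (forall x, q x <= p0 x) /\ (forall y, q (blopp y) <= - q y).
Proof.
  intros Hp.
  set (T := {q : X -> R | sublin q /\ forall x, q x <= p0 x}).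
  set (Rel := fun (q1 q2 : T) => pb (forall x, proj1_sig q2 x <= proj1_sig q1 x)).
  assert (t0 : T) by (exists p0; split; auto; intros; lra).
  destruct (@classical_sets.ZL_preorder T t0 Rel) as [t Ht].
  - intros s. apply pbI. intros; lra.
  - intros r s u H1 H2. apply pbI. apply pbE in H1, H2. intros x. specialize (H1 x). specialize (H2 x). lra.
  - intros A HA. destruct (classic (exists q, A q)) as [[q0 Hq0]|Hne].
    2:{ exists t0. intros s Hs. exfalso; eauto. }
    set (E := fun x e => exists q : T, A q /\ e = proj1_sig q x).
    set (qi := fun x => rinf (E x)).
    assert (Elb : forall x e, E x e -> - p0 (blopp x) <= e).
    { intros x e [[q [Hq1 Hq2]] [_ ->]]. simpl. pose proof (sublin_lower q x Hq1). specialize (Hq2 (blopp x)). lra. }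
    assert (Ene : forall x, exists e, E x e) by (intros x; exists (proj1_sig q0 x); exists q0; auto).
    assert (Hle : forall (q : T) x, A q -> qi x <= proj1_sig q x).
    { intros q x Hq. apply (rinf_lb _ _ (Elb x)). exists q; auto. }
    assert (Hsub : sublin qi).
    { split.
      - intros x y.
        assert (H : forall e2, E y e2 -> qi (bladd x y) - e2 <= qi x).
        { intros e2 [q2 [Hq2 ->]]. apply rinf_glb. apply Ene. intros e1 [q1 [Hq1 ->]].
          destruct q1 as [q1 [S1 B1]], q2 as [q2 [S2 B2]]. simpl.
          destruct (HA _ _ Hq1 Hq2) as [H12|H21]; apply pbE in H12 || apply pbE in H21; simpl in *.
          - pose proof (Hle _ (bladd x y) Hq2). simpl in H. pose proof (proj1 S2 x y). specialize (H12 x). lra.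
          - pose proof (Hle _ (bladd x y) Hq1). simpl in H. pose proof (proj1 S1 x y). specialize (H21 y). lra. }
        assert (qi (bladd x y) - qi x <= qi y).
        { apply rinf_glb. apply Ene. intros e He. specialize (H e He). lra. }
        lra.
      - intros a x Ha. destruct (Req_dec a 0) as [->|Ha0].
        + rewrite Rmult_0_l. apply Rle_antisym.
          * pose proof (Hle q0 (blscal 0 x) Hq0). destruct (proj2_sig q0) as [S0 _]. rewrite (proj2 S0) in H by lra. lra.
          * apply rinf_glb. apply Ene. intros e [q [Hq ->]]. destruct (proj2_sig q) as [S _]. rewrite (proj2 S) by lra. lra.
        + apply Rle_antisym.
          * assert (H1 : qi (blscal a x) / a <= qi x).
            2:{ replace (qi (blscal a x)) with (a * (qi (blscal a x) / a)) by (field; lra). apply Rmult_le_compat_l; lra. }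
            apply rinf_glb. apply Ene. intros e [q [Hq ->]].
            pose proof (Hle q (blscal a x) Hq). destruct (proj2_sig q) as [S _]. rewrite (proj2 S) in H by lra.
            apply Rmult_le_reg_l with a. lra. field_simplify; lra.
          * apply rinf_glb. apply Ene. intros e [q [Hq ->]].
            pose proof (Hle q x Hq). destruct (proj2_sig q) as [S _]. rewrite (proj2 S) by lra.
            apply Rmult_le_compat_l; lra. }
    assert (Hb : forall x, qi x <= p0 x).
    { intros x. pose proof (Hle q0 x Hq0). destruct (proj2_sig q0) as [_ B]. specialize (B x). lra. }
    exists (exist _ qi (conj Hsub Hb)). intros s Hs. apply pbI. simpl. intros x. apply Hle; auto.
  - destruct t as [q [Sq Bq]]. exists q. split; auto. split; auto. intros y.
    assert (Se : sublin (ext q y) /\ forall x, ext q y x <= p0 x).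
    { split. apply ext_sublin; auto. intros x. pose proof (ext_le q y x Sq). pose proof (Bq x). lra. }
    specialize (Ht (exist _ (ext q y) Se)).
    assert (H : Rel (exist _ q (conj Sq Bq)) (exist _ (ext q y) Se) = true).
    { apply pbI. simpl. intros x. apply ext_le; auto. }
    specialize (Ht H). apply pbE in Ht. simpl in Ht. specialize (Ht (blopp y)). pose proof (ext_neg q y Sq). lra.
Qed.

Definition linR {X : BanachLattice} (f : X -> R) : Prop :=
  (forall x y, f (bladd x y) = f x + f y) /\ (forall a x, f (blscal a x) = a * f x).

Lemma hahn_banach {X : BanachLattice} (x0 : X) :
  exists f, linR f /\ (forall z, f z <= blnorm z) /\ f x0 = blnorm x0.
Proof.
  assert (Sn : sublin (@blnorm X)).
  { split. intros; apply bl_norm_tri. intros a x Ha. rewrite bl_norm_scal, Rabs_right; lra. }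
  destruct (minimal_sublin (ext blnorm x0) (ext_sublin _ x0 Sn)) as [q [Sq [Bq Nq]]].
  assert (Oq : forall y, q (blopp y) = - q y).
  { intros y. pose proof (Nq y). pose proof (proj1 Sq y (blopp y)). rewrite bl_addN, sublin0 in H0 by auto. lra. }
  exists q. split; [split|split].
  - intros x y. apply Rle_antisym. apply (proj1 Sq).
    pose proof (proj1 Sq (blopp x) (blopp y)). rewrite <- oppD, !Oq in H. lra.
  - intros a x. destruct (Rle_dec 0 a). apply (proj2 Sq); auto.
    rewrite scal_opp, Oq, (proj2 Sq) by lra. ring.
  - intros z. pose proof (Bq z). pose proof (ext_le blnorm x0 z Sn). lra.
  - apply Rle_antisym. pose proof (Bq x0). pose proof (ext_le blnorm x0 x0 Sn). lra.
    pose proof (Bq (blopp x0)). pose proof (ext_neg blnorm x0 Sn). rewrite Oq in H. lra.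
Qed.

Lemma unit_vec {X : BanachLattice} (x0 : X) : x0 <> bl0 -> blnorm (blscal (/ blnorm x0) x0) = 1 /\ 0 < blnorm x0.
Proof.
  intros H. assert (0 < blnorm x0).
  { destruct (norm_ge0 x0) as [h|h]; auto. exfalso. apply H, bl_norm_eq0. auto. }
  split; auto. rewrite bl_norm_scal, Rabs_right. field; lra. left; apply Rinv_0_lt_compat; lra.
Qed.

Lemma linR_abs {X : BanachLattice} (f : X -> R) : linR f -> (forall z, f z <= blnorm z) -> forall z, Rabs (f z) <= blnorm z.
Proof.
  intros L B z. pose proof (B z). pose proof (B (blopp z)). rewrite opp_scal, (proj2 L) in H0.
  rewrite <- opp_scal, norm_opp in H0. unfold Rabs; destruct (Rcase_abs (f z)); lra.
Qed.

Theorem mainTheorem10 (X Y : BanachLattice) (hX : nontrivial X) (hY : nontrivial Y) :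
  (forall fam : (X -> Y) -> Prop, subset_L X Y fam ->
     uniformly_bounded fam -> l2_bounded fam)
  <-> (two_concave X /\ two_convex Y).
Proof.
  split.
  - intros Hi. destruct hX as [x0 Hx0], hY as [y0 Hy0]. split.
    + destruct (unit_vec y0 Hy0) as [Hy _]. set (y := blscal (/ blnorm y0) y0) in *.
      set (fam := fun T : X -> Y => exists f, linR f /\ (forall z, f z <= blnorm z) /\ forall z, T z = blscal (f z) y).
      assert (UB : forall T, fam T -> op_bounded_by T 1).
      { intros T [f [Lf [Bf HT]]] z. rewrite HT, bl_norm_scal, Hy. pose proof (linR_abs f Lf Bf z). lra. }
      assert (Hsub : subset_L X Y fam).
      { intros T HT0. split; [|exists 1; auto]. destruct HT0 as [f [Lf [Bf HT]]]. split.
        - intros a b. rewrite !HT, (proj1 Lf), bl_scalDl. reflexivity.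
        - intros a b. rewrite !HT, (proj2 Lf), bl_scalA. reflexivity. }
      destruct (Hi fam Hsub (ex_intro _ 1 UB)) as [C [HC HL]]. exists C. intros N x s Hs.
      assert (Hc : forall n : nat, exists f, linR f /\ (forall z, f z <= blnorm z) /\ f (x n) = blnorm (x n)) by (intros; apply hahn_banach).
      set (F := fun n => proj1_sig (constructive_indefinite_description _ (Hc n))).
      assert (HF : forall n, linR (F n) /\ (forall z, F n z <= blnorm z) /\ F n (x n) = blnorm (x n)).
      { intros n. unfold F. destruct (constructive_indefinite_description _ (Hc n)) as [f Hf]. exact Hf. }
      set (T := fun n z => blscal (F n z) y).
      assert (Hm : forall n, (n < N)%nat -> fam (T n)).
      { intros n _. exists (F n). destruct (HF n) as [A [B _]]. split; auto. }
      assert (Ht : sqfun N (fun n => T n (x n)) (blscal (sqrt (rsum N (fun n => blnorm (x n) ^ 2))) (absv y))).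
      { replace (fun n => T n (x n)) with (fun n => blscal (blnorm (x n)) y). apply sqfun_scal.
        apply functional_extensionality. intros n. unfold T. destruct (HF n) as [_ [_ ->]]. reflexivity. }
      pose proof (HL N x T Hm s _ Hs Ht) as H.
      rewrite bl_norm_scal, norm_absv, Hy, Rabs_right in H by (apply Rle_ge, sqrt_pos). lra.
    + destruct (unit_vec x0 Hx0) as [He _]. set (e := blscal (/ blnorm x0) x0) in *.
      destruct (hahn_banach e) as [f [Lf [Bf Hfe]]]. rewrite He in Hfe.
      set (fam := fun T : X -> Y => exists v, blnorm v <= 1 /\ forall z, T z = blscal (f z) v).
      assert (UB : forall T, fam T -> op_bounded_by T 1).
      { intros T [v [Hv HT]] z. rewrite HT, bl_norm_scal. pose proof (linR_abs f Lf Bf z).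
        pose proof (norm_ge0 v). pose proof (Rabs_pos (f z)). nra. }
      assert (Hsub : subset_L X Y fam).
      { intros T HT0. split; [|exists 1; auto]. destruct HT0 as [v [Hv HT]]. split.
        - intros a b. rewrite !HT, (proj1 Lf), bl_scalDl. reflexivity.
        - intros a b. rewrite !HT, (proj2 Lf), bl_scalA. reflexivity. }
      destruct (Hi fam Hsub (ex_intro _ 1 UB)) as [C [HC HL]]. exists C. intros N y s Hs.
      set (r := fun n => blnorm (y n)).
      set (xs := fun n => blscal (r n) e).
      set (T := fun n z => blscal (f z) (blscal (/ r n) (y n))).
      assert (Hm : forall n, (n < N)%nat -> fam (T n)).
      { intros n _. exists (blscal (/ r n) (y n)). split; [|intros; reflexivity].
        rewrite bl_norm_scal. fold (r n). destruct (Req_dec (r n) 0) as [H0|H0].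
        - rewrite H0, Rinv_0, Rabs_R0. lra.
        - pose proof (norm_ge0 (y n)). fold (r n) in H. rewrite Rabs_right. right; field; auto.
          left; apply Rinv_0_lt_compat; lra. }
      assert (Hs' : sqfun N (fun n => T n (xs n)) s).
      { replace (fun n => T n (xs n)) with y; auto. apply functional_extensionality. intros n.
        unfold T, xs. rewrite (proj2 Lf), Hfe, Rmult_1_r, bl_scalA.
        destruct (Req_dec (r n) 0) as [H0|H0].
        - assert (y n = bl0) by (apply bl_norm_eq0; auto). rewrite H, scalx0. reflexivity.
        - rewrite Rinv_r, bl_scal1 by auto. reflexivity. }
      pose proof (HL N xs T Hm _ s (sqfun_scal N r e) Hs') as H.
      rewrite bl_norm_scal, norm_absv, He, Rabs_right in H by (apply Rle_ge, sqrt_pos). unfold r in H. lra.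
  - intros [[CX HX] [CY HY]] fam Hsub [M HM].
    exists (Rabs CY * Rabs M * Rabs CX). split.
    { apply Rmult_le_pos; [apply Rmult_le_pos|]; apply Rabs_pos. }
    intros N x T HT s t Hs Ht.
    pose proof (HY N _ t Ht) as H1. pose proof (HX N x s Hs) as H2.
    set (A := rsum N (fun n => blnorm (T n (x n)) ^ 2)) in *.
    set (B := rsum N (fun n => blnorm (x n) ^ 2)) in *.
    assert (HA : A <= M ^ 2 * B).
    { unfold A, B. rewrite <- rsum_scal. apply rsum_le. intros n Hn.
      pose proof (HM (T n) (HT n Hn) (x n)). pose proof (norm_ge0 (T n (x n))). pose proof (norm_ge0 (x n)). nra. }
    assert (HB0 : 0 <= B) by (apply rsum_ge0; intros; apply pow2_ge_0).
    assert (HsA : sqrt A <= Rabs M * sqrt B).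
    { replace (Rabs M) with (sqrt (M ^ 2)). rewrite <- sqrt_mult_alt by apply pow2_ge_0. apply sqrt_le_1_alt; auto.
      replace (M ^ 2) with (Rsqr M) by (unfold Rsqr; ring). apply sqrt_Rsqr_abs. }
    pose proof (sqrt_pos A). pose proof (sqrt_pos B). pose proof (norm_ge0 s).
    pose proof (Rle_abs CY). pose proof (Rle_abs CX). pose proof (Rabs_pos CY). pose proof (Rabs_pos CX). pose proof (Rabs_pos M).
    assert (CY * sqrt A <= Rabs CY * sqrt A) by nra.
    assert (Rabs CY * sqrt A <= Rabs CY * (Rabs M * sqrt B)) by (apply Rmult_le_compat_l; auto).
    assert (sqrt B <= Rabs CX * blnorm s) by nra.
    assert (Rabs CY * (Rabs M * sqrt B) <= Rabs CY * (Rabs M * (Rabs CX * blnorm s))).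
    { apply Rmult_le_compat_l; auto. apply Rmult_le_compat_l; auto. }
    nra.
Qed.
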